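(* Let $G=(S,T,E,\varphi)$ be a weighted bipartite 2-graph with $|S|=m$, $|T|=n$, let $\mathcal{A}\in NBQ(m,n)$ be its adjacency tensor, and let $\mathcal{Q}=\mathcal{D}^0+\mathcal{D}^x+\mathcal{D}^y+\mathcal{A}$ and $\mathcal{L}=\mathcal{D}^0-\mathcal{D}^x-\mathcal{D}^y+\mathcal{A}$ be its signless Laplacian and Laplacian biquadratic tensors. Then both $\mathcal{Q}$ and $\mathcal{L}$ are positive semi-definite and SOS.
   Context: A biquadratic tensor is $\mathcal{A}=(a_{i_1j_1i_2j_2})\in\mathbb{R}^{m\times n\times m\times n}$ (indices $i_1,i_2\in[m]=\{1,\dots,m\}$, $j_1,j_2\in[n]$); $NBQ(m,n)$ denotes the set of entrywise nonnegative ones. Its associated form is $f(\mathbf{x},\mathbf{y})=\sum_{i_1,i_2=1}^m\sum_{j_1,j_2=1}^n a_{i_1j_1i_2j_2}x_{i_1}y_{j_1}x_{i_2}y_{j_2}$ for $\mathbf{x}\in\mathbb{R}^m,\mathbf{y}\in\mathbb{R}^n$. The tensor is positive semi-definite if $f(\mathbf{x},\mathbf{y})\ge 0$ for all $\mathbf{x},\mathbf{y}$, and SOS if $f$ is a sum of squares of polynomials in $(\mathbf{x},\mathbf{y})$. A bipartite 2-graph $G=(S,T,E)$ has vertex sets $S=\{u_1,\dots,u_m\}$, $T=\{v_1,\dots,v_n\}$ and an edge set $E$ whose elements are pairs $(\{u_{i_1},u_{i_2}\},\{v_{j_1},v_{j_2}\})$ of a 2-element subset of $S$ (so $i_1\ne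 i_2$) and a 2-element subset of $T$ (so $j_1\neq j_2$), with no edge repeated. A weighted bipartite 2-graph additionally has a weight function $\varphi:E\to[0,\infty)$. Its adjacency tensor $\mathcal{A}=(a_{i_1j_1i_2j_2})\in NBQ(m,n)$ is defined by $a_{i_1j_1i_2j_2}=\varphi(e)$ if $i_1\ne i_2$, $j_1\ne j_2$ and $e=(\{u_{i_1},u_{i_2}\},\{v_{j_1},v_{j_2}\})\in E$, and $a_{i_1j_1i_2j_2}=0$ otherwise. (For an unweighted graph, $\varphi\equiv 1$.) The tensors $\mathcal{D}^0,\mathcal{D}^x,\mathcal{D}^y\in NBQ(m,n)$ are defined by: $d^0_{i_1j_1i_2j_2}=\sum_{i_2'=1}^m\sum_{j_2'=1}^n a_{i_1j_1i_2'j_2'}$ if $i_1=i_2$ and $j_1=j_2$, and $0$ otherwise; $d^x_{i_1j_1i_2j_2}=\sum_{i_2'=1}^m a_{i_1j_1i_2'j_2}$ if $i_1=i_2$, and $0$ otherwise; $d^y_{i_1j_1i_2j_2}=\sum_{j_2'=1}^n a_{i_1j_1i_2j_2'}$ if $j_1=j_2$, and $0$ otherwise. *)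

(* Defs.v *)
From HB Require Import structures.
From mathcomp Require Import all_boot all_order all_algebra.
From mathcomp Require Import mpoly.
Set Implicit Arguments. Unset Strict Implicit. Unset Printing Implicit Defensive.
Import Order.TTheory GRing.Theory Num.Theory.
Local Open Scope ring_scope.

Definition bqtensor (R : Type) (m n : nat) := 'I_m -> 'I_n -> 'I_m -> 'I_n -> R.

Section BQ.
Variables (R : rcfType) (m n : nat).

(* An edge is a pair (U, V) with U a 2-subset of S = 'I_m and V a 2-subset
   of T = 'I_n; the edge set is a finite set (hence no repetitions). *)
Definition bip2_edge := ({set 'I_m} * {set 'I_n})%type.

Definition is_bip2graph (E : {set bip2_edge}) : Prop :=
  forall e, e \in E -> #|e.1| = 2%N /\ #|e.2| = 2%N.

Definition is_weight (E : {set bip2_edge}) (phi : bip2_edge -> R) : Prop :=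
  forall e, e \in E -> 0 <= phi e.

Definition adj_tensor (E : {set bip2_edge}) (phi : bip2_edge -> R)
  : bqtensor R m n :=
  fun i1 j1 i2 j2 =>
    if [&& i1 != i2, j1 != j2 & ([set i1; i2], [set j1; j2]) \in E]
    then phi ([set i1; i2], [set j1; j2]) else 0.

Definition D0 (A : bqtensor R m n) : bqtensor R m n :=
  fun i1 j1 i2 j2 =>
    if (i1 == i2) && (j1 == j2)
    then \sum_(i2' < m) \sum_(j2' < n) A i1 j1 i2' j2' else 0.

Definition Dx (A : bqtensor R m n) : bqtensor R m n :=
  fun i1 j1 i2 j2 =>
    if i1 == i2 then \sum_(i2' < m) A i1 j1 i2' j2 else 0.

Definition Dy (A : bqtensor R m n) : bqtensor R m n :=
  fun i1 j1 i2 j2 =>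
    if j1 == j2 then \sum_(j2' < n) A i1 j1 i2 j2' else 0.

Definition signless_laplacian (A : bqtensor R m n) : bqtensor R m n :=
  fun i1 j1 i2 j2 => D0 A i1 j1 i2 j2 + Dx A i1 j1 i2 j2 + Dy A i1 j1 i2 j2
                     + A i1 j1 i2 j2.

Definition laplacian (A : bqtensor R m n) : bqtensor R m n :=
  fun i1 j1 i2 j2 => D0 A i1 j1 i2 j2 - Dx A i1 j1 i2 j2 - Dy A i1 j1 i2 j2
                     + A i1 j1 i2 j2.

Definition bq_form (A : bqtensor R m n) (x : 'I_m -> R) (y : 'I_n -> R) : R :=
  \sum_(i1 < m) \sum_(j1 < n) \sum_(i2 < m) \sum_(j2 < n)
     A i1 j1 i2 j2 * x i1 * y j1 * x i2 * y j2.

Definition bq_psd (A : bqtensor R m n) : Prop :=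
  forall (x : 'I_m -> R) (y : 'I_n -> R), 0 <= bq_form A x y.

Definition xvar (i : 'I_m) : {mpoly R[m + n]} := 'X_(lshift n i).
Definition yvar (j : 'I_n) : {mpoly R[m + n]} := 'X_(rshift m j).

Definition bq_poly (A : bqtensor R m n) : {mpoly R[m + n]} :=
  \sum_(i1 < m) \sum_(j1 < n) \sum_(i2 < m) \sum_(j2 < n)
     A i1 j1 i2 j2 *: (xvar i1 * yvar j1 * xvar i2 * yvar j2).

Definition bq_sos (A : bqtensor R m n) : Prop :=
  exists s : seq {mpoly R[m + n]}, bq_poly A = \sum_(p <- s) p ^+ 2.

End BQ.

(* Main.v *)
Require Import Defs.
From HB Require Import structures.
From mathcomp Require Import all_boot all_order all_algebra.
From mathcomp Require Import mpoly ring.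
Import Order.TTheory GRing.Theory Num.Theory.
Local Open Scope ring_scope.

Definition cind (R : nzRingType) (T : finType) (U : {set T}) (a b : T) : R :=
  if (a != b) && ([set a; b] == U) then 1 else 0.

Definition Dg (R : nzRingType) (T : finType) (c : T -> T -> R) (a b : T) : R :=
  if a == b then \sum_(b' : T) c a b' else 0.

Definition qf (R : comNzRingType) (k : nat) (T : finType) (var : T -> {mpoly R[k]})
  (c : T -> T -> R) : {mpoly R[k]} :=
  \sum_(a : T) \sum_(b : T) c a b *: (var a * var b).

Lemma cindE (R : nzRingType) (T : finType) (i k a b : T) : i != k ->
  @cind R _ [set i; k] a b =
  if ((a == i) && (b == k)) || ((a == k) && (b == i)) then 1 else 0.
Proof.
move=> ik; rewrite /cind; congr (if _ then _ else _).
apply/idP/idP.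
  move=> /andP[nab /eqP E].
  have : a \in [set i; k] by rewrite -E set21.
  have : b \in [set i; k] by rewrite -E set22.
  rewrite !in_set2.
  case/orP=> /eqP hb; case/orP=> /eqP ha; subst a b;
    by rewrite ?eqxx ?orbT // in nab *.
case/orP=> /andP[/eqP -> /eqP ->]; first by rewrite ik eqxx.
by rewrite eq_sym ik /= setUC eqxx.
Qed.

Lemma sum1_pt (V : nmodType) (T : finType) (i k : T) (F : T -> V) : i != k ->
  \sum_(a : T) (if (a == i) || (a == k) then F a else 0) = F i + F k.
Proof.
move=> ik; rewrite -big_mkcond (bigD1 i) ?eqxx //= (bigD1 k) /=.
  rewrite big1 ?addr0 // => a.
  by rewrite -andbA => /andP[/orP[]/eqP-> ]; rewrite eqxx ?andbF.
by rewrite eqxx orbT eq_sym ik.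
Qed.

Lemma sum_pred1 (V : nmodType) (T : finType) (k : T) (G : T -> V) :
  \sum_(b : T) (if b == k then G b else 0) = G k.
Proof. by rewrite -big_mkcond big_pred1_eq. Qed.

Lemma sum2_pt (V : nmodType) (T : finType) (i k : T) (F : T -> T -> V) : i != k ->
  \sum_(a : T) \sum_(b : T)
     (if ((a == i) && (b == k)) || ((a == k) && (b == i)) then F a b else 0)
  = F i k + F k i.
Proof.
move=> ik; have ki : (k == i) = false by rewrite eq_sym (negbTE ik).
rewrite (eq_bigr (fun a => if (a == i) || (a == k)
                           then F a (if a == i then k else i) else 0)).
  by rewrite sum1_pt // eqxx ki.
move=> a _; case: (eqVneq a i) => [->|ai].
  rewrite (eq_bigr (fun b => if b == k then F i b else 0)) ?sum_pred1 //.
  by move=> b _; rewrite (negbTE ik) /= orbF.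
case: (eqVneq a k) => [->|ak].
  rewrite (eq_bigr (fun b => if b == i then F k b else 0)) ?sum_pred1 ?ki //.
by rewrite big1 // => b _; rewrite (negbTE ak).
Qed.

Lemma sum_row (V : nmodType) (T : finType) (i k a : T) (G : T -> V) : i != k ->
  \sum_(b : T)
     (if ((a == i) && (b == k)) || ((a == k) && (b == i)) then G b else 0)
  = if a == i then G k else if a == k then G i else 0.
Proof.
move=> ik; have ki : (k == i) = false by rewrite eq_sym (negbTE ik).
case: (eqVneq a i) => [->|ai].
  rewrite (eq_bigr (fun b => if b == k then G b else 0)) ?sum_pred1 //.
  by move=> b _; rewrite (negbTE ik) /= orbF.
case: (eqVneq a k) => [_|ak].
  by rewrite (eq_bigr (fun b => if b == i then G b else 0)) ?sum_pred1.
by rewrite big1 // => b _; rewrite (negbTE ak).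
Qed.

Lemma qf_sq (R : comNzRingType) (kk : nat) (T : finType) (var : T -> {mpoly R[kk]})
  (U : {set T}) (s : R) : #|U| = 2%N -> s ^+ 2 = 1 ->
  exists p, @qf R kk T var (fun a b => @Dg R T (@cind R T U) a b + s * @cind R T U a b)
            = p ^+ 2.
Proof.
move=> /eqP/cards2P [i [k [ik ->]]] hs.
have ki : (k == i) = false by rewrite eq_sym (negbTE ik).
exists (var i + (s *: 1) * var k).
rewrite /qf.
under eq_bigr => a _ do (under eq_bigr => b _ do rewrite scalerDl); 
under eq_bigr => a _ do rewrite big_split /=.
rewrite big_split /=.
have -> : \sum_(a : T) \sum_(b : T) @Dg R T (@cind R T [set i; k]) a b *: (var a * var b)
   = var i * var i + var k * var k.
  rewrite (eq_bigr (fun a => if (a == i) || (a == k) then var a * var a else 0)).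
    by rewrite sum1_pt.
  move=> a _.
  rewrite (eq_bigr (fun b => if b == a then
     (\sum_(b' : T) @cind R T [set i; k] a b') *: (var a * var b) else 0)).
    rewrite sum_pred1.
    under eq_bigr => b _ do rewrite cindE //.
    rewrite sum_row //.
    case: (eqVneq a i) => [->|ai]; first by rewrite scale1r.
    by case: (eqVneq a k) => [->|ak]; rewrite ?scale1r ?scale0r.
  by move=> b _; rewrite /Dg eq_sym; case: (b == a); rewrite ?scale0r.
have -> : \sum_(a : T) \sum_(b : T) (s * @cind R T [set i; k] a b) *: (var a * var b)
   = s *: (var i * var k) + s *: (var k * var i).
  rewrite -(@sum2_pt _ _ i k (fun a b => s *: (var a * var b)) ik).
  apply: eq_bigr => a _; apply: eq_bigr => b _.
  rewrite cindE //; case: ifP => _; by rewrite ?mulr1 ?mulr0 ?scale0r.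
set S := s *: (1 : {mpoly R[kk]}).
have hS : S * S = 1 by rewrite /S -scalerAl mul1r scalerA -expr2 hs scale1r.
have e1 p : s *: p = S * p by rewrite /S -scalerAl mul1r.
rewrite !e1.
have -> : (var i + S * var k) ^+ 2 =
   var i * var i + S * var i * var k + S * var k * var i + (S * S) * (var k * var k)
  by ring.
rewrite hS mul1r; ring.
Qed.
Lemma sos_psd (R : rcfType) (m n : nat) (A : bqtensor R m n) :
  bq_sos A -> bq_psd A.
Proof.
move=> [s hs] x y.
pose v (t : 'I_(m + n)) := match split t with inl i => x i | inr j => y j end.
have hx i : (@xvar R m n i).@[v] = x i.
  by rewrite /xvar mevalXU /v (unsplitK (@inl _ 'I_n i)).
have hy j : (@yvar R m n j).@[v] = y j.
  by rewrite /yvar mevalXU /v (unsplitK (@inr 'I_m _ j)).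
have -> : bq_form A x y = (bq_poly A).@[v].
  rewrite /bq_poly /bq_form !raddf_sum; apply: eq_bigr => i1 _.
  rewrite !raddf_sum; apply: eq_bigr => j1 _.
  rewrite !raddf_sum; apply: eq_bigr => i2 _.
  rewrite !raddf_sum; apply: eq_bigr => j2 _.
  by rewrite /= mevalZ !mevalM !hx !hy !mulrA.
have -> : (bq_poly A).@[v] = (\sum_(p <- s) p ^+ 2).@[v] by rewrite -hs.
rewrite raddf_sum; apply: sumr_ge0 => p _.
by rewrite /= expr2 mevalM -expr2 sqr_ge0.
Qed.
Lemma sum_sq_seq (V : nzRingType) (X : eqType) (r : seq X) (F : X -> V) :
  (forall e, e \in r -> exists p, F e = p ^+ 2) ->
  exists s : seq V, \sum_(e <- r) F e = \sum_(p <- s) p ^+ 2.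
Proof.
elim: r => [|x r IH] h; first by exists [::]; rewrite !big_nil.
have [p hp] := h x (mem_head x r).
have [s hs] : exists s : seq V, \sum_(e <- r) F e = \sum_(p <- s) p ^+ 2.
  by apply: IH => e he; apply: h; rewrite inE he orbT.
by exists (p :: s); rewrite !big_cons hp hs.
Qed.

Lemma adj_decomp (R : rcfType) (m n : nat) (E : {set bip2_edge m n})
  (phi : bip2_edge m n -> R) i1 j1 i2 j2 :
  adj_tensor E phi i1 j1 i2 j2 =
  \sum_(e in E) phi e * (@cind R _ e.1 i1 i2 * @cind R _ e.2 j1 j2).
Proof.
rewrite /adj_tensor /cind.
case: (boolP ((i1 != i2) && (j1 != j2))) => [/andP[-> ->]|h] /=.
  set e0 := ([set i1; i2], [set j1; j2]).
  rewrite (eq_bigr (fun e => if e == e0 then phi e else 0)); last first.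
    move=> e _; rewrite /e0; case: e => U V /=.
    rewrite !xpair_eqE (eq_sym U) (eq_sym V).
    by case: (_ == U); case: (_ == V); rewrite ?mulr1 ?mulr0 ?mul0r.
  rewrite -big_mkcondr /=.
  case: (boolP (e0 \in E)) => hE.
    by rewrite (big_pred1 e0) // => e; rewrite !inE andbC; case: eqP => // ->.
  by rewrite big1 // => e /andP[eE /eqP ee]; rewrite -ee eE in hE.
move: h; case: (i1 != i2); case: (j1 != j2) => //= _;
  by rewrite big1 // => e _; rewrite ?mulr0 ?mul0r ?mulr0.
Qed.


Lemma D0_decomp (R : rcfType) (m n : nat) (X : finType) (E : {set X}) (f : X -> R)
  (a : X -> 'I_m -> 'I_m -> R) (b : X -> 'I_n -> 'I_n -> R) (A : bqtensor R m n) :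
  (forall i1 j1 i2 j2, A i1 j1 i2 j2 = \sum_(e in E) f e * (a e i1 i2 * b e j1 j2)) ->
  forall i1 j1 i2 j2, D0 A i1 j1 i2 j2 =
    \sum_(e in E) f e * (@Dg R _ (a e) i1 i2 * @Dg R _ (b e) j1 j2).
Proof.
move=> hA i1 j1 i2 j2; rewrite /D0 /Dg.
case: (i1 == i2); case: (j1 == j2) => /=;
  try by rewrite big1 // => e _; rewrite ?mulr0 ?mul0r ?mulr0.
under eq_bigr => i _ do under eq_bigr => j _ do rewrite hA.
under eq_bigr => i _ do rewrite exchange_big.
rewrite exchange_big; apply: eq_bigr => e _.
rewrite mulr_suml mulr_sumr; apply: eq_bigr => i _.
rewrite mulr_sumr mulr_sumr; apply: eq_bigr => j _.
by rewrite !mulrA.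
Qed.

Lemma Dx_decomp (R : rcfType) (m n : nat) (X : finType) (E : {set X}) (f : X -> R)
  (a : X -> 'I_m -> 'I_m -> R) (b : X -> 'I_n -> 'I_n -> R) (A : bqtensor R m n) :
  (forall i1 j1 i2 j2, A i1 j1 i2 j2 = \sum_(e in E) f e * (a e i1 i2 * b e j1 j2)) ->
  forall i1 j1 i2 j2, Dx A i1 j1 i2 j2 =
    \sum_(e in E) f e * (@Dg R _ (a e) i1 i2 * b e j1 j2).
Proof.
move=> hA i1 j1 i2 j2; rewrite /Dx /Dg.
case: (i1 == i2) => /=;
  last by rewrite big1 // => e _; rewrite ?mulr0 ?mul0r ?mulr0.
under eq_bigr => i _ do rewrite hA.
rewrite exchange_big; apply: eq_bigr => e _.
rewrite mulr_suml mulr_sumr; apply: eq_bigr => i _.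
by rewrite !mulrA.
Qed.

Lemma Dy_decomp (R : rcfType) (m n : nat) (X : finType) (E : {set X}) (f : X -> R)
  (a : X -> 'I_m -> 'I_m -> R) (b : X -> 'I_n -> 'I_n -> R) (A : bqtensor R m n) :
  (forall i1 j1 i2 j2, A i1 j1 i2 j2 = \sum_(e in E) f e * (a e i1 i2 * b e j1 j2)) ->
  forall i1 j1 i2 j2, Dy A i1 j1 i2 j2 =
    \sum_(e in E) f e * (a e i1 i2 * @Dg R _ (b e) j1 j2).
Proof.
move=> hA i1 j1 i2 j2; rewrite /Dy /Dg.
case: (j1 == j2) => /=;
  last by rewrite big1 // => e _; rewrite ?mulr0 ?mul0r ?mulr0.
under eq_bigr => j _ do rewrite hA.
rewrite exchange_big; apply: eq_bigr => e _.
rewrite mulr_sumr mulr_sumr; apply: eq_bigr => j _.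
by rewrite !mulrA.
Qed.

Lemma prod_expand (R : rcfType) (m n : nat) (f : R)
  (a : 'I_m -> 'I_m -> R) (b : 'I_n -> 'I_n -> R) :
  f *: (@qf R (m + n) _ (@xvar R m n) a * @qf R (m + n) _ (@yvar R m n) b) =
  \sum_(i1 < m) \sum_(j1 < n) \sum_(i2 < m) \sum_(j2 < n)
     (f * (a i1 i2 * b j1 j2)) *:
       (@xvar R m n i1 * @yvar R m n j1 * @xvar R m n i2 * @yvar R m n j2).
Proof.
rewrite /qf mulr_suml scaler_sumr; apply: eq_bigr => i1 _.
rewrite mulr_suml scaler_sumr.
under eq_bigr => i2 _ do rewrite mulr_sumr scaler_sumr.
rewrite exchange_big; apply: eq_bigr => j1 _; apply: eq_bigr => i2 _.
rewrite mulr_sumr scaler_sumr; apply: eq_bigr => j2 _.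
rewrite -scalerAl -scalerAr !scalerA; congr (_ *: _); ring.
Qed.

Lemma poly_decomp (R : rcfType) (m n : nat) (X : finType) (E : {set X}) (f : X -> R)
  (a : X -> 'I_m -> 'I_m -> R) (b : X -> 'I_n -> 'I_n -> R) (A : bqtensor R m n) :
  (forall i1 j1 i2 j2, A i1 j1 i2 j2 = \sum_(e in E) f e * (a e i1 i2 * b e j1 j2)) ->
  bq_poly A = \sum_(e in E) f e *:
     (@qf R (m + n) _ (@xvar R m n) (a e) * @qf R (m + n) _ (@yvar R m n) (b e)).
Proof.
move=> hA; under eq_bigr => e _ do rewrite prod_expand.
symmetry; rewrite /bq_poly.
rewrite exchange_big; apply: eq_bigr => i1 _.
rewrite exchange_big; apply: eq_bigr => j1 _.
rewrite exchange_big; apply: eq_bigr => i2 _.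
rewrite exchange_big; apply: eq_bigr => j2 _.
by rewrite -scaler_suml hA.
Qed.

Lemma SL_decomp (R : rcfType) (m n : nat) (X : finType) (E : {set X}) (f : X -> R)
  (a : X -> 'I_m -> 'I_m -> R) (b : X -> 'I_n -> 'I_n -> R) (A : bqtensor R m n) :
  (forall i1 j1 i2 j2, A i1 j1 i2 j2 = \sum_(e in E) f e * (a e i1 i2 * b e j1 j2)) ->
  forall i1 j1 i2 j2, signless_laplacian A i1 j1 i2 j2 =
    \sum_(e in E) f e * ((@Dg R _ (a e) i1 i2 + 1 * a e i1 i2) *
                         (@Dg R _ (b e) j1 j2 + 1 * b e j1 j2)).
Proof.
move=> hA i1 j1 i2 j2; rewrite /signless_laplacian.
rewrite (@D0_decomp _ _ _ _ _ _ _ _ _ hA) (@Dx_decomp _ _ _ _ _ _ _ _ _ hA) (@Dy_decomp _ _ _ _ _ _ _ _ _ hA) hA -!big_split /=.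
by apply: eq_bigr => e _; ring.
Qed.

Lemma L_decomp (R : rcfType) (m n : nat) (X : finType) (E : {set X}) (f : X -> R)
  (a : X -> 'I_m -> 'I_m -> R) (b : X -> 'I_n -> 'I_n -> R) (A : bqtensor R m n) :
  (forall i1 j1 i2 j2, A i1 j1 i2 j2 = \sum_(e in E) f e * (a e i1 i2 * b e j1 j2)) ->
  forall i1 j1 i2 j2, laplacian A i1 j1 i2 j2 =
    \sum_(e in E) f e * ((@Dg R _ (a e) i1 i2 + (-1) * a e i1 i2) *
                         (@Dg R _ (b e) j1 j2 + (-1) * b e j1 j2)).
Proof.
move=> hA i1 j1 i2 j2; rewrite /laplacian.
rewrite (@D0_decomp _ _ _ _ _ _ _ _ _ hA) (@Dx_decomp _ _ _ _ _ _ _ _ _ hA) (@Dy_decomp _ _ _ _ _ _ _ _ _ hA) hA -!sumrB -!big_split /=.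
by apply: eq_bigr => e _; ring.
Qed.

Lemma sos_main (R : rcfType) (m n : nat) (E : {set bip2_edge m n})
  (phi : bip2_edge m n -> R) (s : R) (T : bqtensor R m n) :
  is_bip2graph E -> is_weight E phi -> s ^+ 2 = 1 ->
  (forall i1 j1 i2 j2, T i1 j1 i2 j2 =
    \sum_(e in E) phi e * ((@Dg R _ (@cind R _ e.1) i1 i2 + s * @cind R _ e.1 i1 i2) *
                         (@Dg R _ (@cind R _ e.2) j1 j2 + s * @cind R _ e.2 j1 j2))) ->
  bq_sos T.
Proof.
move=> hG hw hs hT.
rewrite /bq_sos (@poly_decomp R m n _ E phi
  (fun e i1 i2 => @Dg R _ (@cind R _ e.1) i1 i2 + s * @cind R _ e.1 i1 i2)
  (fun e j1 j2 => @Dg R _ (@cind R _ e.2) j1 j2 + s * @cind R _ e.2 j1 j2) T hT).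
rewrite -big_enum; apply: sum_sq_seq => e; rewrite mem_enum => eE.
have [p hp] := @qf_sq R (m + n) _ (@xvar R m n) _ s (hG e eE).1 hs.
have [q hq] := @qf_sq R (m + n) _ (@yvar R m n) _ s (hG e eE).2 hs.
exists (Num.sqrt (phi e) *: (p * q)).
by rewrite /= hp hq exprZn sqr_sqrtr ?hw // exprMn.
Qed.

Theorem lemma3p1 (R : rcfType) (m n : nat)
  (E : {set bip2_edge m n}) (phi : bip2_edge m n -> R) :
  is_bip2graph E -> is_weight E phi ->
  let A := adj_tensor E phi in
  [/\ bq_psd (signless_laplacian A), bq_sos (signless_laplacian A),
      bq_psd (laplacian A) & bq_sos (laplacian A)].
Proof.
move=> hG hw A.
have hA := @adj_decomp R m n E phi.
have h1 : bq_sos (signless_laplacian A).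
  apply: (@sos_main R m n E phi 1 _ hG hw); first by rewrite expr1n.
  exact: (@SL_decomp _ _ _ _ _ _ _ _ _ hA).
have h2 : bq_sos (laplacian A).
  apply: (@sos_main R m n E phi (-1) _ hG hw); first by rewrite sqrrN expr1n.
  exact: (@L_decomp _ _ _ _ _ _ _ _ _ hA).
by split => //; apply: sos_psd.
Qed.
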